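(* Let $\mathcal{E}$ be an extensive category with finite limits and suppose that the full inclusion $\mathrm{Dec}\,\mathcal{E} \to \mathcal{E}$ has a left adjoint $L : \mathcal{E} \to \mathrm{Dec}\,\mathcal{E}$. Then $L$ preserves finite products if and only if $L$ preserves pullbacks over decidable objects (equivalently, the adjunction between $L$ and the inclusion has stable units).
   Context: A category with finite coproducts is extensive if for all objects $X,Y$ the canonical functor $\mathcal{E}/X \times \mathcal{E}/Y \to \mathcal{E}/(X+Y)$ is an equivalence. A map $X\to Z$ is a summand if there is $Y \to Z$ with $X \to Z \leftarrow Y$ a coproduct. An object $X$ of an extensive category with finite products is decidable if its diagonal $X \to X\times X$ is a summand; $\mathrm{Dec}\,\mathcal{E}$ denotes the full subcategory of decidable objects (it is closed under finite products, finite coproducts and subobjects, and is extensive). An adjunction $L \dashv R$ with $R:\mathcal{B}\to\mathcal{E}$ fully faithful has stable units if $L$ preserves pullbacks over objects of the form $RB$, $B\in\mathcal{B}$. *)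

(* Defs.v *)
Set Implicit Arguments.
Unset Strict Implicit.

Record Category := {
  ob :> Type;
  hom : ob -> ob -> Type;
  idm : forall a, hom a a;
  comp : forall a b c, hom b c -> hom a b -> hom a c;
  comp_id_l : forall a b (f : hom a b), comp (idm b) f = f;
  comp_id_r : forall a b (f : hom a b), comp f (idm a) = f;
  comp_assoc : forall a b c d (f : hom a b) (g : hom b c) (h : hom c d),
      comp h (comp g f) = comp (comp h g) f
}.
Arguments hom {c0} a b.
Arguments idm {c0} a.
Arguments comp {c0 a b c} g f.
Notation "g \o f" := (comp g f) (at level 40, left associativity).

Section Limits.
Variable C : Category.

(* With S := fun _ => True these are the usual notions in C; with S the
   predicate defining a full subcategory (and apex/vertices in S) they are
   the corresponding notions in that full subcategory. *)

Definition is_terminal_in (S : C -> Prop) (t : C) : Prop :=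
  forall x, S x -> exists! f : hom x t, True.

Definition is_initial (i : C) : Prop :=
  forall x, exists! f : hom i x, True.

Definition is_product_in (S : C -> Prop) (a b p : C)
  (p1 : hom p a) (p2 : hom p b) : Prop :=
  forall x, S x -> forall (f : hom x a) (g : hom x b),
    exists! h : hom x p, p1 \o h = f /\ p2 \o h = g.

Definition is_coproduct (a b s : C) (i1 : hom a s) (i2 : hom b s) : Prop :=
  forall x (f : hom a x) (g : hom b x),
    exists! h : hom s x, h \o i1 = f /\ h \o i2 = g.

Definition is_pullback_in (S : C -> Prop) (a b z p : C)
  (f : hom a z) (g : hom b z) (p1 : hom p a) (p2 : hom p b) : Prop :=
  f \o p1 = g \o p2 /\
  forall x, S x -> forall (h : hom x a) (k : hom x b), f \o h = g \o k ->
    exists! u : hom x p, p1 \o u = h /\ p2 \o u = k.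

Definition is_equalizer (a b e : C) (f g : hom a b) (m : hom e a) : Prop :=
  f \o m = g \o m /\
  forall x (h : hom x a), f \o h = g \o h -> exists! u : hom x e, m \o u = h.

Definition allobj : C -> Prop := fun _ => True.

Definition has_finite_limits : Prop :=
  (exists t, is_terminal_in allobj t) /\
  (forall a b, exists p (p1 : hom p a) (p2 : hom p b), is_product_in allobj p1 p2) /\
  (forall a b (f g : hom a b), exists e (m : hom e a), is_equalizer f g m) /\
  (forall a b z (f : hom a z) (g : hom b z),
      exists p (p1 : hom p a) (p2 : hom p b), is_pullback_in allobj f g p1 p2).

Definition has_initial : Prop := exists i, is_initial i.

End Limits.

Record BinCoproducts (C : Category) := {
  cop : C -> C -> C;
  cinl : forall a b, hom a (cop a b);
  cinr : forall a b, hom b (cop a b);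
  cop_is : forall a b, is_coproduct (cinl a b) (cinr a b);
  copair : forall a b x, hom a x -> hom b x -> hom (cop a b) x;
  copair_l : forall a b x (f : hom a x) (g : hom b x), copair f g \o cinl a b = f;
  copair_r : forall a b x (f : hom a x) (g : hom b x), copair f g \o cinr a b = g
}.

Record BinProducts (C : Category) := {
  prd : C -> C -> C;
  pr1 : forall a b, hom (prd a b) a;
  pr2 : forall a b, hom (prd a b) b;
  prd_is : forall a b, is_product_in (@allobj C) (pr1 a b) (pr2 a b);
  pair : forall x a b, hom x a -> hom x b -> hom x (prd a b);
  pair_1 : forall x a b (f : hom x a) (g : hom x b), pr1 a b \o pair f g = f;
  pair_2 : forall x a b (f : hom x a) (g : hom x b), pr2 a b \o pair f g = g
}.

Section Extensive.
Variables (C : Category) (bc : BinCoproducts C).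

Definition slice_ob (X : C) := { A : C & hom A X }.
Definition slice_hom (X : C) (a b : slice_ob X) :=
  { u : hom (projT1 a) (projT1 b) | projT2 b \o u = projT2 a }.

Definition canon_ob (X Y : C) (a : slice_ob X) (b : slice_ob Y)
  : slice_ob (cop bc X Y) :=
  existT _ (cop bc (projT1 a) (projT1 b))
    (copair bc (cinl bc X Y \o projT2 a) (cinr bc X Y \o projT2 b)).

Definition canon_map (A B A' B' : C) (u : hom A A') (v : hom B B')
  : hom (cop bc A B) (cop bc A' B') :=
  copair bc (cinl bc A' B' \o u) (cinr bc A' B' \o v).

Definition canon_fully_faithful (X Y : C) : Prop :=
  forall (a a' : slice_ob X) (b b' : slice_ob Y)
         (w : slice_hom (canon_ob a b) (canon_ob a' b')),
    exists! uv : slice_hom a a' * slice_hom b b',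
      proj1_sig w = canon_map (proj1_sig (fst uv)) (proj1_sig (snd uv)).

Definition canon_ess_surj (X Y : C) : Prop :=
  forall z : slice_ob (cop bc X Y),
    exists (a : slice_ob X) (b : slice_ob Y)
           (h : slice_hom (canon_ob a b) z) (k : slice_hom z (canon_ob a b)),
      proj1_sig h \o proj1_sig k = idm (projT1 z) /\
      proj1_sig k \o proj1_sig h = idm (projT1 (canon_ob a b)).

Definition extensive : Prop :=
  has_initial C /\ forall X Y, canon_fully_faithful X Y /\ canon_ess_surj X Y.

End Extensive.

Section Decidable.
Variables (C : Category) (bp : BinProducts C).

Definition summand (X Z : C) (m : hom X Z) : Prop :=
  exists Y (g : hom Y Z), is_coproduct m g.

Definition decidable (X : C) : Prop :=
  summand (pair bp (idm X) (idm X)).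

End Decidable.

(* A left adjoint L to the full inclusion of the full subcategory of C given
   by the predicate S, presented by its universal arrows (units)
   eta_X : X -> L X, together with its action on morphisms (natural in X). *)
Record reflection (C : Category) (S : C -> Prop) := {
  Lob : C -> C;
  Lob_S : forall X, S (Lob X);
  eta : forall X, hom X (Lob X);
  eta_univ : forall X D (f : hom X D), S D ->
      exists! g : hom (Lob X) D, g \o eta X = f;
  Lmap : forall X Y, hom X Y -> hom (Lob X) (Lob Y);
  Lmap_nat : forall X Y (f : hom X Y), Lmap f \o eta X = eta Y \o f
}.

Section Preservation.
Variables (C : Category) (S : C -> Prop) (L : reflection S).

(* L : C -> S preserves finite products (terminal object and binary products);
   limits in the full subcategory S are tested against objects of S. *)
Definition preserves_finite_products : Prop :=
  (forall t, is_terminal_in (@allobj C) t -> is_terminal_in S (Lob L t)) /\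
  (forall a b p (p1 : hom p a) (p2 : hom p b),
      is_product_in (@allobj C) p1 p2 ->
      is_product_in S (Lmap L p1) (Lmap L p2)).

Definition stable_units : Prop :=
  forall a b z p (f : hom a z) (g : hom b z) (p1 : hom p a) (p2 : hom p b),
    S z -> is_pullback_in (@allobj C) f g p1 p2 ->
    is_pullback_in S (Lmap L f) (Lmap L g) (Lmap L p1) (Lmap L p2).

End Preservation.

(* Main.v *)
Require Import Defs.
From Stdlib Require Import Setoid.
Set Implicit Arguments.
Unset Strict Implicit.

Section Main.
Variable C : Category.

Lemma postc (a c d : C) (l r : hom a c) (H : l = r) (k : hom c d) : k \o l = k \o r.
Proof. subst; reflexivity. Qed.

Ltac nA := repeat rewrite comp_assoc.
Ltac nAin H := repeat rewrite comp_assoc in H.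
Ltac lrw H :=
  let H' := fresh in pose proof (fun d k => @postc _ _ d _ _ H k) as H';
  simpl in H'; repeat setoid_rewrite comp_assoc in H';
  repeat rewrite comp_assoc;
  progress (repeat rewrite H; repeat rewrite H'); clear H'.
Ltac cid := repeat (rewrite comp_id_l || rewrite comp_id_r).

Definition isom (a b : C) (f : hom a b) := exists g : hom b a, g \o f = idm a /\ f \o g = idm b.

Lemma isom_id (a : C) : isom (idm a).
Proof. exists (idm a); split; apply comp_id_l. Qed.

Lemma cp_uniq (a b s : C) (i1 : hom a s) (i2 : hom b s) : is_coproduct i1 i2 ->
  forall x (h h' : hom s x), h \o i1 = h' \o i1 -> h \o i2 = h' \o i2 -> h = h'.
Proof.
  intros H x h h' E1 E2. destruct (H x (h \o i1) (h \o i2)) as [u [_ Hu]].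
  transitivity u; [symmetry|]; apply Hu; split; auto.
Qed.

Lemma cp_ex (a b s : C) (i1 : hom a s) (i2 : hom b s) : is_coproduct i1 i2 ->
  forall x (f : hom a x) (g : hom b x), exists h, h \o i1 = f /\ h \o i2 = g.
Proof. intros H x f g. destruct (H x f g) as [u [Hu _]]. eauto. Qed.

Lemma init_uniq (i : C) : is_initial i -> forall x (f g : hom i x), f = g.
Proof. intros H x f g. destruct (H x) as [u [_ Hu]]. transitivity u; [symmetry|]; apply Hu; auto. Qed.

Lemma init_ex (i : C) : is_initial i -> forall x, exists f : hom i x, True.
Proof. intros H x. destruct (H x) as [u _]. eauto. Qed.

Lemma cp_iso_post (a b s s' : C) (i1 : hom a s) (i2 : hom b s) (p : hom s s') :
  is_coproduct i1 i2 -> isom p -> is_coproduct (p \o i1) (p \o i2).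
Proof.
  intros H [q [Hqp Hpq]] x f g. destruct (H x f g) as [h [[h1 h2] hu]].
  exists (h \o q). split.
  - split; nA; lrw Hqp; cid; auto.
  - intros h' [E1 E2]. nAin E1; nAin E2.
    assert (h = h' \o p) by (apply hu; split; auto).
    rewrite H0. rewrite <- comp_assoc, Hpq. cid. auto.
Qed.

Lemma cp_iso_pre (a b a' b' s : C) (i1 : hom a s) (i2 : hom b s) (al : hom a' a) (be : hom b' b) :
  is_coproduct i1 i2 -> isom al -> isom be -> is_coproduct (i1 \o al) (i2 \o be).
Proof.
  intros H [al' [A1 A2]] [be' [B1 B2]] x f g. destruct (H x (f \o al') (g \o be')) as [h [[h1 h2] hu]].
  exists h. split.
  - split; nA; [lrw h1|lrw h2]; rewrite <- comp_assoc; [rewrite A1|rewrite B1]; cid; auto.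
  - intros h' [E1 E2]. apply hu. nAin E1; nAin E2. split.
    + rewrite <- E1. rewrite <- comp_assoc, A2. cid; auto.
    + rewrite <- E2. rewrite <- comp_assoc, B2. cid; auto.
Qed.

Lemma cp_sym (a b s : C) (i1 : hom a s) (i2 : hom b s) : is_coproduct i1 i2 -> is_coproduct i2 i1.
Proof.
  intros H x f g. destruct (H x g f) as [h [[h1 h2] hu]]. exists h. split; [auto|].
  intros h' [E1 E2]; apply hu; auto.
Qed.

Lemma cp_init_compl (a b s : C) (i1 : hom a s) (i2 : hom b s) : is_coproduct i1 i2 -> is_initial b -> isom i1.
Proof.
  intros H Hb. destruct (init_ex Hb a) as [z _].
  destruct (cp_ex H (idm a) z) as [r [r1 r2]]. exists r. split; auto.
  apply (cp_uniq H).
  - rewrite <- comp_assoc, r1. cid. auto.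
  - apply (init_uniq Hb).
Qed.

Lemma cp_iso_init (a b s : C) (i1 : hom a s) (i2 : hom b s) : isom i1 -> is_initial b -> is_coproduct i1 i2.
Proof.
  intros [j [J1 J2]] Hb x f g. exists (f \o j). split.
  - split. + rewrite <- comp_assoc, J1; cid; auto. + apply (init_uniq Hb).
  - intros h' [E1 _]. rewrite <- E1. rewrite <- comp_assoc, J2. cid; auto.
Qed.

Lemma isom_mono (a b : C) (f : hom a b) : isom f -> forall x (u v : hom x a), f \o u = f \o v -> u = v.
Proof.
  intros [g [G1 G2]] x u v E. rewrite <- (comp_id_l u), <- (comp_id_l v), <- G1.
  rewrite <- !comp_assoc, E. auto.
Qed.

Section Prod.
Variable bp : BinProducts C.

Lemma pr_uniq (x a b : C) (h h' : hom x (prd bp a b)) :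
  pr1 bp a b \o h = pr1 bp a b \o h' -> pr2 bp a b \o h = pr2 bp a b \o h' -> h = h'.
Proof.
  intros E1 E2. destruct (@prd_is C bp a b x I (pr1 bp a b \o h) (pr2 bp a b \o h)) as [u [_ Hu]].
  transitivity u; [symmetry|]; apply Hu; auto.
Qed.

Lemma pair_comp (y x a b : C) (f : hom x a) (g : hom x b) (h : hom y x) :
  pair bp f g \o h = pair bp (f \o h) (g \o h).
Proof. apply pr_uniq; rewrite !comp_assoc, ?pair_1, ?pair_2; auto. Qed.

Lemma pair_eta (x a b : C) (h : hom x (prd bp a b)) : h = pair bp (pr1 bp a b \o h) (pr2 bp a b \o h).
Proof. apply pr_uniq; rewrite ?pair_1, ?pair_2; auto. Qed.
Lemma pair_split (w x y a b : C) (f : hom x a) (g : hom x b) (f' : hom y a) (g' : hom y b) (u : hom w x) (e : hom w y) :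
  pair bp f g \o u = pair bp f' g' \o e -> f \o u = f' \o e /\ g \o u = g' \o e.
Proof.
  intro E. split.
  - pose proof (f_equal (fun m => pr1 bp a b \o m) E) as E'. simpl in E'. nAin E'. rewrite !pair_1 in E'. auto.
  - pose proof (f_equal (fun m => pr2 bp a b \o m) E) as E'. simpl in E'. nAin E'. rewrite !pair_2 in E'. auto.
Qed.
End Prod.


Section Ext.
Variable bc : BinCoproducts C.
Hypothesis Hff : forall X Y, canon_fully_faithful bc X Y.
Hypothesis Hes : forall X Y, canon_ess_surj bc X Y.
Variable z0 : C.
Hypothesis Hz0 : is_initial z0.

Lemma copis (a b : C) : is_coproduct (cinl bc a b) (cinr bc a b).
Proof. exact (@cop_is C bc a b). Qed.
Arguments copis : clear implicits.

Lemma FF (X Y A B A' B' : C) (a : hom A X) (b : hom B Y) (a' : hom A' X) (b' : hom B' Y)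
  (w : hom (cop bc A B) (cop bc A' B')) :
  copair bc (cinl bc X Y \o a') (cinr bc X Y \o b') \o w = copair bc (cinl bc X Y \o a) (cinr bc X Y \o b) ->
  exists (u : hom A A') (v : hom B B'), a' \o u = a /\ b' \o v = b /\ w = canon_map bc u v.
Proof.
  intro E.
  destruct (@Hff X Y (existT _ A a) (existT _ A' a') (existT _ B b) (existT _ B' b') (exist _ w E))
    as [[[u Hu] [v Hv]] [Hw _]]. simpl in *. eauto.
Qed.

Lemma ES (X Y T : C) (t : hom T (cop bc X Y)) : exists T1 (t1 : hom T1 X) T2 (t2 : hom T2 Y)
  (h : hom (cop bc T1 T2) T) (k : hom T (cop bc T1 T2)),
  t \o h = copair bc (cinl bc X Y \o t1) (cinr bc X Y \o t2) /\ h \o k = idm T /\ k \o h = idm _.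
Proof.
  destruct (@Hes X Y (existT _ T t)) as [[T1 t1] [[T2 t2] [[h Hh] [[k Hk] [E1 E2]]]]]. simpl in *.
  exists T1, t1, T2, t2, h, k. auto.
Qed.

Lemma copair_cinl (a b x : C) (f : hom a x) (g : hom b x) : copair bc f g \o cinl bc a b = f.
Proof. apply copair_l. Qed.
Lemma copair_cinr (a b x : C) (f : hom a x) (g : hom b x) : copair bc f g \o cinr bc a b = g.
Proof. apply copair_r. Qed.

Lemma strict (W : C) (h : hom W z0) : is_initial W.
Proof.
  destruct (@FF z0 z0 W W W W h h h h (copair bc (cinr bc W W) (cinl bc W W))) as [u [v [Hu [Hv Hw]]]].
  { apply (cp_uniq (copis _ _)).
    - rewrite <- comp_assoc, copair_cinl, copair_cinr, !copair_cinl.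
      f_equal. apply (init_uniq Hz0).
    - rewrite <- comp_assoc, copair_cinr, copair_cinl, !copair_cinr.
      f_equal. apply (init_uniq Hz0). }
  assert (E : cinr bc W W = cinl bc W W \o u).
  { transitivity (copair bc (cinr bc W W) (cinl bc W W) \o cinl bc W W).
    - rewrite copair_cinl; auto.
    - rewrite Hw. unfold canon_map. rewrite copair_cinl. auto. }
  assert (Eu : u = idm W).
  { pose proof (f_equal (fun m => copair bc (idm W) (idm W) \o m) E) as E'. simpl in E'.
    rewrite copair_cinr, comp_assoc, copair_cinl, comp_id_l in E'. auto. }
  rewrite Eu, comp_id_r in E.
  assert (All : forall x (g1 g2 : hom W x), g1 = g2).
  { intros x g1 g2. rewrite <- (copair_cinl g1 g2) at 1. rewrite <- E, copair_cinr. auto. }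
  intro x. destruct (init_ex Hz0 x) as [e _]. exists (e \o h). split; auto.
Qed.

Lemma cinl_iso (X : C) : isom (cinl bc X z0).
Proof. apply (cp_init_compl (copis _ _) Hz0). Qed.
Lemma cinr_iso (X : C) : isom (cinr bc z0 X).
Proof. apply (cp_init_compl (cp_sym (copis _ _)) Hz0). Qed.

Lemma cinl_mono (X Y W : C) (p q : hom W X) : cinl bc X Y \o p = cinl bc X Y \o q -> p = q.
Proof.
  intro E. destruct (init_ex Hz0 Y) as [zY _].
  destruct (@FF X Y W z0 X z0 p zY (idm X) zY (canon_map bc q (idm z0))) as [u [v [Hu [Hv Hw]]]].
  { apply (cp_uniq (copis _ _)).
    - unfold canon_map. rewrite <- comp_assoc, !copair_cinl. nA. rewrite copair_cinl. cid. auto.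
    - apply (init_uniq Hz0). }
  rewrite comp_id_l in Hu. subst u.
  apply (isom_mono (cinl_iso X)).
  pose proof (f_equal (fun m => m \o cinl bc W z0) Hw) as E'. simpl in E'. unfold canon_map in E'.
  rewrite !copair_cinl in E'. auto.
Qed.

Lemma cinr_mono (X Y W : C) (p q : hom W Y) : cinr bc X Y \o p = cinr bc X Y \o q -> p = q.
Proof.
  intro E. destruct (init_ex Hz0 X) as [zX _].
  destruct (@FF X Y z0 W z0 Y zX p zX (idm Y) (canon_map bc (idm z0) q)) as [u [v [Hu [Hv Hw]]]].
  { apply (cp_uniq (copis _ _)).
    - apply (init_uniq Hz0).
    - unfold canon_map. rewrite <- comp_assoc, !copair_cinr. nA. rewrite copair_cinr. cid. auto. }
  rewrite comp_id_l in Hv. subst v.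
  apply (isom_mono (cinr_iso Y)).
  pose proof (f_equal (fun m => m \o cinr bc z0 W) Hw) as E'. simpl in E'. unfold canon_map in E'.
  rewrite !copair_cinr in E'. auto.
Qed.

Lemma disj_chosen (X Y W : C) (p : hom W X) (q : hom W Y) : cinl bc X Y \o p = cinr bc X Y \o q -> is_initial W.
Proof.
  intro E. destruct (init_ex Hz0 X) as [zX _]. destruct (init_ex Hz0 Y) as [zY _].
  destruct (init_ex Hz0 W) as [zW _].
  destruct (@FF X Y W z0 z0 W p zY zX q (cinr bc z0 W \o copair bc (idm W) zW)) as [u [v [Hu [Hv Hw]]]].
  { apply (cp_uniq (copis _ _)).
    - rewrite <- !comp_assoc, copair_cinl, comp_id_r, copair_cinl. nA. rewrite copair_cinr. auto.
    - apply (init_uniq Hz0). }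
  exact (strict u).
Qed.

Lemma cp_chosen_iso (X1 X2 K : C) (i1 : hom X1 K) (i2 : hom X2 K) : is_coproduct i1 i2 ->
  exists p : hom (cop bc X1 X2) K, isom p /\ p \o cinl bc X1 X2 = i1 /\ p \o cinr bc X1 X2 = i2.
Proof.
  intro H. destruct (cp_ex H (cinl bc X1 X2) (cinr bc X1 X2)) as [q [Q1 Q2]].
  exists (copair bc i1 i2). split; [|split; [apply copair_cinl|apply copair_cinr]].
  exists q. split.
  - apply (cp_uniq (copis _ _)); rewrite <- comp_assoc; [rewrite copair_cinl|rewrite copair_cinr]; cid; auto.
  - apply (cp_uniq H); rewrite <- comp_assoc; [rewrite Q1, copair_cinl|rewrite Q2, copair_cinr]; cid; auto.
Qed.

Lemma mono1 (X1 X2 K : C) (i1 : hom X1 K) (i2 : hom X2 K) : is_coproduct i1 i2 ->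
  forall W (p q : hom W X1), i1 \o p = i1 \o q -> p = q.
Proof.
  intros H W p q E. destruct (cp_chosen_iso H) as [f [Hf [F1 F2]]].
  apply (@cinl_mono X1 X2). apply (isom_mono Hf). rewrite !comp_assoc, F1. auto.
Qed.

Lemma mono2 (X1 X2 K : C) (i1 : hom X1 K) (i2 : hom X2 K) : is_coproduct i1 i2 ->
  forall W (p q : hom W X2), i2 \o p = i2 \o q -> p = q.
Proof. intro H. apply (mono1 (cp_sym H)). Qed.

Lemma disj (X1 X2 K : C) (i1 : hom X1 K) (i2 : hom X2 K) : is_coproduct i1 i2 ->
  forall W (p : hom W X1) (q : hom W X2), i1 \o p = i2 \o q -> is_initial W.
Proof.
  intros H W p q E. destruct (cp_chosen_iso H) as [f [[g [G1 G2]] [F1 F2]]].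
  apply (@disj_chosen X1 X2 W p q).
  transitivity (g \o (i1 \o p)). { rewrite <- F1. nA. rewrite G1. cid. auto. }
  rewrite E, <- F2. nA. rewrite G1; cid; auto.
Qed.

Lemma decomp (X1 X2 K : C) (i1 : hom X1 K) (i2 : hom X2 K) : is_coproduct i1 i2 ->
  forall T (t : hom T K), exists T1 T2 (s1 : hom T1 T) (s2 : hom T2 T) (t1 : hom T1 X1) (t2 : hom T2 X2),
  is_coproduct s1 s2 /\ t \o s1 = i1 \o t1 /\ t \o s2 = i2 \o t2.
Proof.
  intros H T t. destruct (cp_chosen_iso H) as [f [[g [G1 G2]] [F1 F2]]].
  destruct (ES (g \o t)) as [T1 [t1 [T2 [t2 [h [k [E [HK KH]]]]]]]].
  exists T1, T2, (h \o cinl bc T1 T2), (h \o cinr bc T1 T2), t1, t2. split; [|split].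
  - apply cp_iso_post; [apply copis|]. exists k; auto.
  - transitivity (f \o ((g \o t) \o h) \o cinl bc T1 T2). { nA. rewrite G2. cid. auto. }
    rewrite E. rewrite <- comp_assoc, copair_cinl. nA. rewrite F1. auto.
  - transitivity (f \o ((g \o t) \o h) \o cinr bc T1 T2). { nA. rewrite G2. cid. auto. }
    rewrite E. rewrite <- comp_assoc, copair_cinr. nA. rewrite F2. auto.
Qed.

Lemma pb_factor1 (X1 X2 K T T1 T2 : C) (i1 : hom X1 K) (i2 : hom X2 K) (s1 : hom T1 T) (s2 : hom T2 T)
  (t : hom T K) (t1 : hom T1 X1) (t2 : hom T2 X2) :
  is_coproduct i1 i2 -> is_coproduct s1 s2 -> t \o s1 = i1 \o t1 -> t \o s2 = i2 \o t2 ->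
  forall W (x : hom W T) (v : hom W X1), t \o x = i1 \o v -> exists z, s1 \o z = x.
Proof.
  intros H Hs E1 E2 W x v Ex.
  destruct (decomp Hs x) as [W1 [W2 [r1 [r2 [x1 [x2 [Hr [R1 R2]]]]]]]].
  assert (I2 : is_initial W2).
  { apply (disj H (p := v \o r2) (q := t2 \o x2)). rewrite comp_assoc, <- Ex, comp_assoc.
    rewrite <- (comp_assoc r2 x t), R2. nA. rewrite E2. auto. }
  destruct (cp_init_compl Hr I2) as [rho [P1 P2]].
  exists (x1 \o rho). rewrite comp_assoc, <- R1, <- comp_assoc, P2. cid. auto.
Qed.

Lemma pb_factor2 (X1 X2 K T T1 T2 : C) (i1 : hom X1 K) (i2 : hom X2 K) (s1 : hom T1 T) (s2 : hom T2 T)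
  (t : hom T K) (t1 : hom T1 X1) (t2 : hom T2 X2) :
  is_coproduct i1 i2 -> is_coproduct s1 s2 -> t \o s1 = i1 \o t1 -> t \o s2 = i2 \o t2 ->
  forall W (x : hom W T) (v : hom W X2), t \o x = i2 \o v -> exists z, s2 \o z = x.
Proof. intros H Hs E1 E2. exact (pb_factor1 (cp_sym H) (cp_sym Hs) E2 E1). Qed.

Section Dec.
Variable bp : BinProducts C.

Lemma DecC_dec (X O1 O2 Tw : C) (j1 : hom O1 Tw) (j2 : hom O2 Tw) (chi : hom (prd bp X X) Tw) (e0 : hom X O1) :
  is_coproduct j1 j2 -> chi \o pair bp (idm X) (idm X) = j1 \o e0 ->
  (forall y (a b : hom y X) (o : hom y O1), chi \o pair bp a b = j1 \o o -> a = b) -> decidable bp X.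
Proof.
  intros Hj E0 Hc.
  destruct (decomp Hj chi) as [E [E' [s1 [s2 [o1 [o2 [Hs [S1 S2]]]]]]]].
  destruct (pb_factor1 Hj Hs S1 S2 (x := pair bp (idm X) (idm X)) (v := e0) E0) as [z Hz].
  assert (Heq : pr1 bp X X \o s1 = pr2 bp X X \o s1).
  { apply (Hc _ _ _ o1). rewrite <- pair_eta. auto. }
  assert (Iz : isom z).
  { exists (pr1 bp X X \o s1). split.
    - rewrite <- comp_assoc, Hz, pair_1. auto.
    - apply (mono1 Hs). rewrite comp_assoc, Hz, pair_comp, comp_id_l, comp_id_r.
      rewrite (pair_eta s1) at 3. rewrite <- Heq. auto. }
  unfold decidable, summand. exists E', s2. rewrite <- Hz.
  rewrite <- (comp_id_r s2). apply cp_iso_pre; auto. apply isom_id.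
Qed.

Lemma Dcop (X Y : C) : decidable bp X -> decidable bp Y -> decidable bp (cop bc X Y).
Proof.
  intros [NX [nX HnX]] [NY [nY HnY]].
  set (K := cop bc X Y). set (P := prd bp K K).
  set (p1 := pr1 bp K K). set (p2 := pr2 bp K K).
  set (inl := cinl bc X Y). set (inr := cinr bc X Y).
  assert (Hc : is_coproduct inl inr) by apply copis.
  destruct (decomp Hc p1) as [U [V [u [v [a [b [Huv [Ua Vb]]]]]]]].
  destruct (decomp Hc (p2 \o u)) as [U1 [U2 [u1 [u2 [c1 [c2 [Hu12 [C1 C2]]]]]]]].
  destruct (decomp Hc (p2 \o v)) as [V1 [V2 [v1 [v2 [d1 [d2 [Hv12 [D1 D2]]]]]]]].
  destruct (decomp HnX (pair bp (a \o u1) c1)) as [W1 [W1' [w1 [w1' [e1 [n1 [Hw1 [W1e W1n]]]]]]]].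
  destruct (decomp HnY (pair bp (b \o v2) d2)) as [W2 [W2' [w2 [w2' [e2 [n2 [Hw2 [W2e W2n]]]]]]]].
  set (j1 := cinl bc K P). set (j2 := cinr bc K P).
  assert (Hj : is_coproduct j1 j2) by apply copis.
  destruct (cp_ex Hw1 (j1 \o inl \o e1) (j2 \o u \o u1 \o w1')) as [gU1 [GU1a GU1b]].
  destruct (cp_ex Hu12 gU1 (j2 \o u \o u2)) as [gU [GUa GUb]].
  destruct (cp_ex Hw2 (j1 \o inr \o e2) (j2 \o v \o v2 \o w2')) as [gV2 [GV2a GV2b]].
  destruct (cp_ex Hv12 (j2 \o v \o v1) gV2) as [gV [GVa GVb]].
  destruct (cp_ex Huv gU gV) as [chi [Chu Chv]].
  assert (AW : a \o u1 \o w1 = e1 /\ c1 \o w1 = e1).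
  { destruct (pair_split W1e) as [E1 E2]. rewrite comp_id_l in E1, E2. nAin E1. auto. }
  assert (BW : b \o v2 \o w2 = e2 /\ d2 \o w2 = e2).
  { destruct (pair_split W2e) as [E1 E2]. rewrite comp_id_l in E1, E2. nAin E1. auto. }
  destruct AW as [AW1 AW2]. destruct BW as [BW1 BW2].
  apply (DecC_dec Hj (chi := chi) (e0 := idm K)).
  - apply (cp_uniq Hc).
    + rewrite <- comp_assoc, pair_comp, !comp_id_l, comp_id_r.
      destruct (pb_factor1 Hc Huv Ua Vb (x := pair bp inl inl) (v := idm X)) as [z1 Z1].
      { unfold p1. rewrite pair_1, comp_id_r. auto. }
      destruct (pb_factor1 Hc Hu12 C1 C2 (x := z1) (v := idm X)) as [z2 Z2].
      { rewrite <- comp_assoc, Z1. unfold p2. rewrite pair_2, comp_id_r. auto. }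
      assert (az : a \o u1 \o z2 = idm X).
      { apply (cinl_mono (Y := Y)). fold inl. rewrite comp_id_r. nA. rewrite <- Ua.
        lrw Z2. lrw Z1.
        unfold p1. apply pair_1. }
      assert (cz : c1 \o z2 = idm X).
      { apply (cinl_mono (Y := Y)). fold inl. rewrite comp_id_r. nA. rewrite <- C1.
        lrw Z2. lrw Z1.
        unfold p2. apply pair_2. }
      destruct (pb_factor1 HnX Hw1 W1e W1n (x := z2) (v := idm X)) as [z3 Z3].
      { rewrite pair_comp, comp_id_r. rewrite az, cz. auto. }
      assert (ez : e1 \o z3 = idm X).
      { rewrite <- AW2, <- comp_assoc, Z3. exact cz. }
      transitivity (chi \o (u \o (u1 \o (w1 \o z3)))). { rewrite Z3, Z2, Z1. auto. }
      nA. rewrite Chu, GUa, GU1a. rewrite <- comp_assoc, ez, comp_id_r. auto.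
    + rewrite <- comp_assoc, pair_comp, !comp_id_l, comp_id_r.
      destruct (pb_factor2 Hc Huv Ua Vb (x := pair bp inr inr) (v := idm Y)) as [z1 Z1].
      { unfold p1. rewrite pair_1, comp_id_r. auto. }
      destruct (pb_factor2 Hc Hv12 D1 D2 (x := z1) (v := idm Y)) as [z2 Z2].
      { rewrite <- comp_assoc, Z1. unfold p2. rewrite pair_2, comp_id_r. auto. }
      assert (bz : b \o v2 \o z2 = idm Y).
      { apply (cinr_mono (X := X)). fold inr. rewrite comp_id_r. nA. rewrite <- Vb.
        lrw Z2. lrw Z1.
        unfold p1. apply pair_1. }
      assert (dz : d2 \o z2 = idm Y).
      { apply (cinr_mono (X := X)). fold inr. rewrite comp_id_r. nA. rewrite <- D2.
        lrw Z2. lrw Z1.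
        unfold p2. apply pair_2. }
      destruct (pb_factor1 HnY Hw2 W2e W2n (x := z2) (v := idm Y)) as [z3 Z3].
      { rewrite pair_comp, comp_id_r. rewrite bz, dz. auto. }
      assert (ez : e2 \o z3 = idm Y).
      { rewrite <- BW2, <- comp_assoc, Z3. exact dz. }
      transitivity (chi \o (v \o (v2 \o (w2 \o z3)))). { rewrite Z3, Z2, Z1. auto. }
      nA. rewrite Chv, GVb, GV2a. rewrite <- comp_assoc, ez, comp_id_r. auto.
  - unfold j1, j2, inl, inr, p1, p2, P, K in *. intros y a' b' o Eq.
    remember (pair bp a' b') as x eqn:Hx.
    assert (Ha : a' = pr1 bp _ _ \o x) by (subst x; symmetry; apply pair_1).
    assert (Hb : b' = pr2 bp _ _ \o x) by (subst x; symmetry; apply pair_2).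
    destruct (decomp Huv x) as [Ya [Yb [ra [rb [xa [xb [Hr [Ra Rb]]]]]]]].
    apply (cp_uniq Hr).
    + destruct (decomp Hu12 xa) as [Ya1 [Ya2 [ra1 [ra2 [xa1 [xa2 [Hra [Ra1 Ra2]]]]]]]].
      apply (cp_uniq Hra).
      * destruct (decomp Hw1 xa1) as [Y11 [Y12 [q1 [q2 [y1 [y2 [Hq [Q1 Q2]]]]]]]].
        apply (cp_uniq Hq).
        -- rewrite Ha, Hb. nA. lrw Ra. lrw Ra1. lrw Q1. rewrite Ua, C1. nA. lrw AW1. lrw AW2. auto.
        -- eapply init_uniq. apply (disj Hj (p := o \o ra \o ra1 \o q2) (q := u \o u1 \o w1' \o y2)).
           nA. rewrite <- Eq. lrw Ra. rewrite Chu. lrw Ra1. rewrite GUa. lrw Q2. rewrite GU1b. nA. auto.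
      * eapply init_uniq. apply (disj Hj (p := o \o ra \o ra2) (q := u \o u2 \o xa2)).
        nA. rewrite <- Eq. lrw Ra. rewrite Chu. lrw Ra2. rewrite GUb. nA. auto.
    + destruct (decomp Hv12 xb) as [Yb1 [Yb2 [rb1 [rb2 [xb1 [xb2 [Hrb [Rb1 Rb2]]]]]]]].
      apply (cp_uniq Hrb).
      * eapply init_uniq. apply (disj Hj (p := o \o rb \o rb1) (q := v \o v1 \o xb1)).
        nA. rewrite <- Eq. lrw Rb. rewrite Chv. lrw Rb1. rewrite GVa. nA. auto.
      * destruct (decomp Hw2 xb2) as [Y21 [Y22 [q1 [q2 [y1 [y2 [Hq [Q1 Q2]]]]]]]].
        apply (cp_uniq Hq).
        -- rewrite Ha, Hb. nA. lrw Rb. lrw Rb2. lrw Q1. rewrite Vb, D2. nA. lrw BW1. lrw BW2. auto.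
        -- eapply init_uniq. apply (disj Hj (p := o \o rb \o rb2 \o q2) (q := v \o v2 \o w2' \o y2)).
           nA. rewrite <- Eq. lrw Rb. rewrite Chv. lrw Rb2. rewrite GVb. lrw Q2. rewrite GV2b. nA. auto.
Qed.

Lemma term_uniq (S : C -> Prop) (t x : C) : is_terminal_in S t -> S x -> forall (f g : hom x t), f = g.
Proof. intros H Sx f g. destruct (H x Sx) as [u [_ Hu]]. transitivity u; [symmetry|]; apply Hu; auto. Qed.

Lemma term_dec (t : C) : is_terminal_in (@allobj C) t -> decidable bp t.
Proof.
  intro Ht. destruct (init_ex Hz0 (prd bp t t)) as [z _].
  exists z0, z. apply cp_iso_init; auto.
  exists (pr1 bp t t). split; [apply pair_1|].
  apply pr_uniq; apply (term_uniq Ht); exact I.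
Qed.

Section Refl.
Variable L : reflection (decidable bp).

Lemma eta_ext_uniq (X D : C) (g g' : hom (Lob L X) D) : decidable bp D -> g \o eta L X = g' \o eta L X -> g = g'.
Proof.
  intros HD E. destruct (eta_univ L (g \o eta L X) HD) as [u [_ Hu]].
  transitivity u; [symmetry|]; apply Hu; auto.
Qed.

Lemma Lmap_char (X Y : C) (f : hom X Y) (g : hom (Lob L X) (Lob L Y)) : g \o eta L X = eta L Y \o f -> g = Lmap L f.
Proof. intro E. apply eta_ext_uniq; [apply Lob_S|]. rewrite Lmap_nat. auto. Qed.

Lemma Lmap_comp (X Y Z : C) (f : hom X Y) (g : hom Y Z) : Lmap L (g \o f) = Lmap L g \o Lmap L f.
Proof. symmetry. apply Lmap_char. rewrite <- comp_assoc, Lmap_nat, comp_assoc, Lmap_nat. nA. auto. Qed.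

Lemma eta_iso (X : C) : decidable bp X -> isom (eta L X).
Proof.
  intro HX. destruct (eta_univ L (idm X) HX) as [e [He _]]. exists e. split; auto.
  apply eta_ext_uniq; [apply Lob_S|]. rewrite <- comp_assoc, He. cid. auto.
Qed.

Lemma Lterm (t : C) : is_terminal_in (@allobj C) t -> is_terminal_in (decidable bp) (Lob L t).
Proof.
  intros Ht x Sx. destruct (Ht x I) as [f _]. exists (eta L t \o f). split; auto.
  intros g _. destruct (eta_iso (term_dec Ht)) as [e [E1 E2]].
  rewrite <- (comp_id_l g), <- E2. rewrite <- comp_assoc. f_equal. apply (term_uniq Ht); exact I.
Qed.

Lemma su_pfp (T : C) (HT : is_terminal_in (@allobj C) T) : stable_units L -> preserves_finite_products L.
Proof.
  intro Hsu. split; [exact Lterm|].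
  intros a b p p1 p2 Hp.
  destruct (HT a I) as [ta _]. destruct (HT b I) as [tb _].
  assert (Hpb : is_pullback_in (@allobj C) ta tb p1 p2).
  { split. apply (term_uniq HT); exact I. intros x _ h k _. apply (Hp x I h k). }
  destruct (Hsu _ _ _ _ _ _ _ _ (term_dec HT) Hpb) as [_ Hu].
  intros x Sx f g. apply (Hu x Sx f g). apply (term_uniq (Lterm HT) Sx).
Qed.

Lemma pfp_su : preserves_finite_products L -> stable_units L.
Proof.
  intros [_ Hpp] a b z p f g p1 p2 Sz Hpb.
  destruct Hpb as [Hcomm Hpbu].
  split. { rewrite <- !Lmap_comp, Hcomm. auto. }
  intros x Sx h k Ehk.
  pose proof Sz as Sz0. destruct Sz as [Nz [nz Hnz]].
  destruct (decomp Hnz (pair bp (f \o pr1 bp a b) (g \o pr2 bp a b)))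
    as [Q1 [Q2 [q1 [q2 [t1 [t2 [Hq [Q1e Q2e]]]]]]]].
  destruct (pair_split Q1e) as [F1 G1].
  assert (hfg : f \o (pr1 bp a b \o q1) = g \o (pr2 bp a b \o q1)).
  { rewrite !comp_assoc, F1, G1. auto. }
  destruct (Hpbu Q1 I _ _ hfg) as [j [[J1 J2] _]].
  assert (Mj : pair bp p1 p2 \o j = q1).
  { apply pr_uniq; rewrite comp_assoc; [rewrite pair_1|rewrite pair_2]; auto. }
  destruct (pb_factor1 Hnz Hq Q1e Q2e (x := pair bp p1 p2) (v := f \o p1)) as [j' J'].
  { rewrite !pair_comp, comp_id_l. rewrite <- !comp_assoc, pair_1, pair_2, Hcomm. auto. }
  assert (Ij' : isom j').
  { exists j. split.
    - destruct (Hpbu p I p1 p2 Hcomm) as [w0 [_ Hw0]].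
      transitivity w0; [symmetry|]; apply Hw0; split.
      + rewrite comp_assoc, J1, <- comp_assoc, J'. apply pair_1.
      + rewrite comp_assoc, J2, <- comp_assoc, J'. apply pair_2.
      + apply comp_id_r.
      + apply comp_id_r.
    - apply (mono1 Hq). rewrite comp_assoc, J', Mj, comp_id_r. auto. }
  assert (Hm : is_coproduct (pair bp p1 p2) q2).
  { rewrite <- J', <- (comp_id_r q2). apply cp_iso_pre; auto. apply isom_id. }
  set (m := pair bp p1 p2) in *.
  assert (HK : decidable bp (cop bc (Lob L p) (Lob L Q2))) by (apply Dcop; apply Lob_S).
  destruct (cp_ex Hm (cinl bc (Lob L p) (Lob L Q2) \o eta L p) (cinr bc (Lob L p) (Lob L Q2) \o eta L Q2))
    as [c0 [C0a C0b]].
  destruct (eta_univ L c0 HK) as [rho [Rho _]].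
  assert (Hkc : copair bc (Lmap L m) (Lmap L q2) \o c0 = eta L _).
  { apply (cp_uniq Hm).
    - rewrite <- comp_assoc, C0a, comp_assoc, copair_cinl, Lmap_nat. auto.
    - rewrite <- comp_assoc, C0b, comp_assoc, copair_cinr, Lmap_nat. auto. }
  assert (HLm : is_coproduct (Lmap L m) (Lmap L q2)).
  { rewrite <- (copair_cinl (Lmap L m) (Lmap L q2)) at 1. rewrite <- (copair_cinr (Lmap L m) (Lmap L q2)) at 2.
    apply cp_iso_post; [apply copis|]. exists rho. split.
    - apply (cp_uniq (copis _ _)).
      + rewrite <- comp_assoc, copair_cinl. cid. apply (eta_ext_uniq HK).
        rewrite <- comp_assoc, Lmap_nat, comp_assoc, Rho, C0a. auto.
      + rewrite <- comp_assoc, copair_cinr. cid. apply (eta_ext_uniq HK).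
        rewrite <- comp_assoc, Lmap_nat, comp_assoc, Rho, C0b. auto.
    - apply eta_ext_uniq; [apply Lob_S|]. rewrite <- comp_assoc, Rho, Hkc. cid. auto. }
  destruct (Hpp _ _ _ _ _ (@prd_is C bp a b) x Sx h k) as [w [[W1 W2] Wu]].
  destruct (decomp HLm w) as [x1 [x2 [s1 [s2 [w1 [w2 [Hs [S1 S2]]]]]]]].
  destruct (eta_univ L (idm z) Sz0) as [eps [Eps _]].
  assert (HZ2 : decidable bp (cop bc z z)) by (apply Dcop; auto).
  destruct (cp_ex Hnz (cinl bc z z) (cinr bc z z \o pr1 bp z z \o nz)) as [c [Ca Cb]].
  destruct (eta_univ L (pr1 bp z z \o nz \o t2) Sz0) as [mu [Mu _]].
  set (F := Lmap L (f \o pr1 bp a b \o q2)). set (G := Lmap L (g \o pr2 bp a b \o q2)).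
  assert (Hgam : c \o pair bp (eps \o F) (eps \o G) = cinr bc z z \o mu).
  { apply (eta_ext_uniq HZ2). rewrite <- comp_assoc, pair_comp, <- !comp_assoc.
    unfold F, G. rewrite !Lmap_nat, !comp_assoc, Eps, !comp_id_l.
    lrw Mu. rewrite <- pair_comp. lrw Q2e. lrw Cb. nA. auto. }
  assert (FG : F \o w2 = G \o w2).
  { unfold F, G. rewrite !Lmap_comp. rewrite <- !comp_assoc, <- S2, !comp_assoc.
    rewrite <- (comp_assoc w (Lmap L (pr1 bp a b))), <- (comp_assoc w (Lmap L (pr2 bp a b))), W1, W2.
    rewrite Ehk. auto. }
  assert (I2 : is_initial x2).
  { apply (disj (copis z z) (p := eps \o F \o w2) (q := mu \o w2)).
    rewrite <- Ca, <- comp_assoc, pair_comp, comp_id_l.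
    transitivity ((c \o pair bp (eps \o F) (eps \o G)) \o w2).
    - rewrite <- (comp_assoc w2 (pair bp (eps \o F) (eps \o G)) c), pair_comp, <- !comp_assoc, FG. auto.
    - rewrite Hgam. nA. auto. }
  destruct (cp_init_compl Hs I2) as [sig [Sg1 Sg2]].
  assert (Lp1 : Lmap L p1 = Lmap L (pr1 bp a b) \o Lmap L m).
  { rewrite <- Lmap_comp. unfold m. rewrite pair_1. auto. }
  assert (Lp2 : Lmap L p2 = Lmap L (pr2 bp a b) \o Lmap L m).
  { rewrite <- Lmap_comp. unfold m. rewrite pair_2. auto. }
  assert (Mw : Lmap L m \o (w1 \o sig) = w).
  { rewrite comp_assoc, <- S1, <- comp_assoc, Sg2. cid. auto. }
  exists (w1 \o sig). split.
  - rewrite Lp1, Lp2, <- !comp_assoc, Mw. auto.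
  - intros u' [U1 U2]. apply (mono1 HLm). rewrite Mw. apply Wu. split.
    + rewrite comp_assoc, <- Lp1. auto.
    + rewrite comp_assoc, <- Lp2. auto.
Qed.

End Refl.
End Dec.
End Ext.
End Main.

Unset Implicit Arguments.

Theorem corollary2p2 (C : Category) (bc : BinCoproducts C) (bp : BinProducts C)
  (Hext : extensive bc) (Hlim : has_finite_limits C)
  (L : reflection (decidable bp)) :
  preserves_finite_products L <-> stable_units L.
Proof.
  destruct Hext as [[i0 Hi0] Hce].
  assert (Hff : forall X Y, canon_fully_faithful bc X Y) by (intros; apply Hce).
  assert (Hes : forall X Y, canon_ess_surj bc X Y) by (intros; apply Hce).
  destruct Hlim as [[T HT] _].
  split.
  - eapply pfp_su; eassumption.
  - eapply su_pfp; eassumption.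
Qed.
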